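(* For every set $Q\subseteq\{0,1\}^n$ of at most $q=2^{0.01\sqrt n}$ points, $\Pr_{\mathbf A}[\mathsf{Bad}_J]=o_n(1)$.
   Context: Let $n$ be even and $a=n/2$. $\mathbf A\subseteq[n]$ is a uniformly random set of size $a$ and $\mathbf C=[n]\setminus\mathbf A$; $x_B$ denotes the restriction of $x$ to $B$ and $|z|$ the Hamming weight. The event $\mathsf{Bad}_J$ holds iff there exist $x,y\in Q$ with $x_{\mathbf C}=y_{\mathbf C}$, $|x_{\mathbf A}|>a/2+0.05\sqrt a$ and $|y_{\mathbf A}|<a/2-0.05\sqrt a$. *)

(* Defs.v *)
From mathcomp Require Import all_boot.
From Stdlib Require Import Reals.
Set Implicit Arguments. Unset Strict Implicit. Unset Printing Implicit Defensive.

Notation cube n := {ffun 'I_n -> bool}.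

Definition wt n (x : cube n) (B : {set 'I_n}) : nat := #|[set i in B | x i]|.

Definition Rltb (u v : R) : bool := if Rlt_dec u v then true else false.

(* Bad_J for the split (A, C = [n] \ A), with a = n/2 *)
Definition BadJ n (Q : {set cube n}) (A : {set 'I_n}) : bool :=
  let a := INR (n./2) in
  [exists x in Q, exists y in Q,
     [&& [forall i in ~: A, x i == y i],
         Rltb (a / 2 + (5 / 100) * sqrt a) (INR (wt x A)) &
         Rltb (INR (wt y A)) (a / 2 - (5 / 100) * sqrt a)]].

Definition PrBad n (Q : {set cube n}) : R :=
  (INR #|[set A : {set 'I_n} | (#|A| == n./2) && BadJ Q A]| / INR 'C(n, n./2))%R.

(* Main.v *)
Require Import Defs.
From mathcomp Require Import all_boot.
From Stdlib Require Import Reals Lra Lia.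
From Stdlib Require ZArith.
From mathcomp Require Import zify.

Lemma card_bigcup_le (I T : finType) (P : pred I) (F : I -> {set T}) :
  #|\bigcup_(i | P i) F i| <= \sum_(i | P i) #|F i|.
Proof.
elim/big_rec2: _ => [|i U k Pi IH]; first by rewrite cards0.
apply: leq_trans (leq_card_setU _ _).1 _.
by rewrite leq_add2l.
Qed.

Lemma bin_half m j d : 2 * j <= m -> d <= j -> 'C(m - d, j - d) * expn 2 d <= 'C(m, j).
Proof.
move=> hjm; elim: d => [|d IH] hd; first by rewrite !subn0 muln1.
apply: leq_trans (IH (ltnW hd)).
set M := m - d; set J := j - d.
have hJ : 0 < J by rewrite /J subn_gt0.
have hJM : 2 * J <= M by rewrite /J /M; lia.
have e1 : m - d.+1 = M.-1 by rewrite /M subnS.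
have e2 : j - d.+1 = J.-1 by rewrite /J subnS.
rewrite e1 e2 expnSr mulnA -mulnA (mulnC (expn 2 d)) mulnA leq_pmul2r ?expn_gt0 //.
have := mul_bin_diag M J.-1; rewrite prednK // => hb.
rewrite -(leq_pmul2l hJ) -hb.
apply: (leq_trans _ (leq_mul hJM (leqnn 'C(M.-1,J.-1)))).
by rewrite mulnC -mulnA mulnC.
Qed.

Lemma count_super (T : finType) (D : {set T}) k :
  2 * k <= #|T| ->
  #|[set A : {set T} | (#|A| == k) && (D \subset A)]| * expn 2 #|D| <= 'C(#|T|, k).
Proof.
move=> hk.
set S := [set A : {set T} | _].
have [hdk | hkd] := leqP #|D| k; last first.
  suff -> : S = set0 by rewrite cards0.
  apply/setP=> A; rewrite !inE; apply/negbTE/negP => /andP[/eqP hA hDA].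
  by have := subset_leq_card hDA; rewrite hA leqNgt hkd.
pose f := fun A : {set T} => A :\: D.
have hinj : {in S &, injective f}.
  move=> A B; rewrite !inE => /andP[_ hA] /andP[_ hB] e.
  apply/setP=> x; have := congr1 (fun X : {set T} => x \in X) e; rewrite /f !inE.
  case xD: (x \in D) => /=; last by [].
  by rewrite (subsetP hA x xD) (subsetP hB x xD).
have hsub : f @: S \subset [set B : {set T} | B \subset ~: D & #|B| == k - #|D|].
  apply/subsetP=> B /imsetP[A]; rewrite !inE => /andP[/eqP hA hDA] ->.
  rewrite /f; apply/andP; split.
    by apply/subsetP=> x; rewrite !inE => /andP[].
  by rewrite cardsDS // hA.
have := subset_leq_card hsub; rewrite card_in_imset // cards_draws => hS.
apply: leq_trans (leq_mul hS (leqnn _)) _.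
have hC : #|~: D| = #|T| - #|D| by rewrite -(cardsC D) addKn.
rewrite hC; apply: bin_half => //.
Qed.

Definition Dxy {n} (x y : cube n) : {set 'I_n} := [set i | x i != y i].

Lemma wt_le n (x y : cube n) A : wt x A <= wt y A + #|Dxy x y|.
Proof.
rewrite /wt; apply: leq_trans (leq_card_setU _ _).1.
apply: subset_leq_card; apply/subsetP=> i; rewrite !inE => /andP[iA xi].
by rewrite iA /=; case: (y i) xi => //= ->.
Qed.

Lemma count_main n (Q : {set cube n}) (k0 : nat) (P : {set 'I_n} -> bool) :
 (forall A : {set 'I_n}, #|A| = n./2 -> P A -> exists x y, [/\ x \in Q, y \in Q, Dxy x y \subset A & k0 <= #|Dxy x y|]) ->
 #|[set A : {set 'I_n} | (#|A| == n./2) && P A]| * expn 2 k0 <= #|Q| * #|Q| * 'C(n, n./2).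
Proof.
move=> H.
pose S' (p : cube n * cube n) := if k0 <= #|Dxy p.1 p.2| then
   [set A : {set 'I_n} | (#|A| == n./2) && (Dxy p.1 p.2 \subset A)] else set0.
have hsub : [set A : {set 'I_n} | (#|A| == n./2) && P A] \subset \bigcup_(p in setX Q Q) S' p.
  apply/subsetP=> A; rewrite inE => /andP[/eqP hA PA].
  have [x [y [xQ yQ hD hk]]] := H A hA PA.
  apply/bigcupP; exists (x, y); first by rewrite inE xQ yQ.
  by rewrite /S' /= hk inE hA eqxx hD.
apply: leq_trans (leq_mul (subset_leq_card hsub) (leqnn _)) _.
apply: (leq_trans (leq_mul (card_bigcup_le _ _ _ _) (leqnn (expn 2 k0)))).
rewrite big_distrl /= -cardsX -sum_nat_const.
apply: leq_sum => p _; rewrite /S'.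
case: ifP => hk; last by rewrite cards0.
have h2 : 2 * n./2 <= #|'I_n| by rewrite card_ord mul2n -{2}(odd_double_half n); apply: leq_addl.
have := count_super _ (Dxy p.1 p.2) _ h2; rewrite card_ord => hc.
apply: leq_trans hc.
by rewrite leq_mul2l leq_exp2l // hk orbT.
Qed.

Open Scope R_scope.

Lemma INR_muln a b : INR (muln a b) = INR a * INR b.
Proof. exact: mult_INR. Qed.

Lemma INR_expn2 k : INR (expn 2 k) = 2 ^ k.
Proof. elim: k => [|k IH] //=. rewrite expnS INR_muln IH /=. lra. Qed.

Lemma k0_prop (c : R) : 0 <= c ->
  let k0 := Z.to_nat (up c) in c <= INR k0 /\ forall d : nat, c < INR d -> leq k0 d.
Proof.
move=> hc k0; have [h1 h2] := archimed c.
have hz : (0 <= up c)%Z.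
  apply: le_IZR; lra.
split.
  by rewrite /k0 INR_IZR_INZ Znat.Z2Nat.id //; lra.
move=> d hd; apply/leP.
apply/(Znat.Nat2Z.inj_le _ _); rewrite /k0 Znat.Z2Nat.id //.
rewrite INR_IZR_INZ in hd.
apply/BinInt.Z.nlt_ge => hlt.
have : (Z.of_nat d <= up c - 1)%Z by lia.
move/IZR_le; rewrite minus_IZR; lra.
Qed.

Lemma RltbP u v : Rltb u v -> u < v.
Proof. by rewrite /Rltb; case: Rlt_dec. Qed.

Lemma bad_pairs n (Q : {set cube n}) (A : {set 'I_n}) (k0 : nat) :
  (forall d : nat, (1/10) * sqrt (INR n./2) < INR d -> leq k0 d) ->
  BadJ Q A -> exists x y, [/\ x \in Q, y \in Q, Dxy x y \subset A & leq k0 #|Dxy x y|].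
Proof.
move=> hk /existsP[x /andP[xQ /existsP[y /andP[yQ /and3P[hf h1 h2]]]]].
exists x, y; split => //.
  apply/subsetP=> i; rewrite inE => hi.
  case iA: (i \in A) => //.
  have : i \in ~: A by rewrite inE iA.
  by move=> iC; have := forallP hf i; rewrite iC /= (negbTE hi).
apply: hk.
move/RltbP: h1 => h1; move/RltbP: h2 => h2.
have hw := wt_le _ x y A.
move/leP/le_INR: hw; rewrite plus_INR => hw.
lra.
Qed.

Close Scope R_scope.

Theorem mainTheorem14 :
  forall eps : R, (0 < eps)%R ->
  exists N : nat, forall n : nat, (N <= n)%N -> ~~ odd n ->
  forall Q : {set cube n},
    (INR #|Q| <= Rpower 2 ((1 / 100) * sqrt (INR n)))%R ->
    (PrBad Q <= eps)%R.
Proof.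
Open Scope R_scope.
move=> eps heps.
have [N hN] := INR_unbounded ((40/eps)^2).
exists N => n hNn hev Q hQ.
have hn : (40/eps)^2 < INR n by move/leP/le_INR: hNn; lra.
have he0 : 0 < 40/eps by apply: Rdiv_lt_0_compat; lra.
have ha : INR n = 2 * INR n./2.
  have := odd_double_half n; rewrite (negbTE hev) add0n -mul2n => e.
  by rewrite -{1}e INR_muln.
set a := INR n./2 in ha *.
set s := sqrt (INR n).
have hs : 40/eps <= s.
  rewrite -(sqrt_pow2 (40/eps)); last lra.
  apply: sqrt_le_1_alt; lra.
have ha0 : 0 <= a by apply: pos_INR.
have hsa : 7/10 * s <= sqrt a.
  have e1 := sqrt_sqrt a ha0.
  have e2 : s * s = INR n by apply: sqrt_sqrt; lra.
  have := sqrt_pos a; have := sqrt_pos (INR n); rewrite -/s => p1 p2.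
  nra.
set c := 1/10 * sqrt a.
have hc0 : 0 <= c by have := sqrt_pos a; rewrite /c; lra.
have [hc1 hc2] := k0_prop c hc0.
set k0 := Z.to_nat (up c) in hc1 hc2.
have hcnt := count_main n Q k0 (BadJ Q) (fun A _ hA => bad_pairs n Q A k0 hc2 hA).
move/leP/le_INR: hcnt; rewrite !INR_muln INR_expn2 => hcnt.
rewrite /PrBad.
set B := INR _ in hcnt *.
set C := INR 'C(n, n./2) in hcnt *.
have hC : 0 < C.
  apply: lt_0_INR; apply/ltP; rewrite bin_gt0.
  by rewrite -{2}(odd_double_half n) -addnn addnA leq_addl.
have hB : 0 <= B by apply: pos_INR.
set q := INR #|Q| in hcnt hQ.
have hq : 0 <= q by apply: pos_INR.
set E := Rpower 2 (1 / 100 * s) in hQ.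
set H := Rpower 2 (s / 20).
have hK : E * E * H <= 2 ^ k0.
  rewrite -Rpower_pow; last lra.
  rewrite /E /H -!Rpower_plus.
  apply: Rle_Rpower; first lra.
rewrite /c in hc1; lra.
have hH : s / 40 <= H.
  rewrite /H /Rpower.
  have := exp_ineq1_le (s / 20 * ln 2).
  have := ln_lt_2.
  have : 0 <= s by apply: sqrt_pos.
  nra.
have hE : 0 < E by apply: exp_pos.
have hH0 : 0 < H by apply: exp_pos.
have h1 : B * (E * E * H) <= E * E * C.
  have : q * q <= E * E by nra.
  have : 0 <= B * (E * E * H) by apply: Rmult_le_pos => //; nra.
  nra.
have h2 : B * H <= C.
  have hEE : 0 < E * E by nra.
  apply: (Rmult_le_reg_l (E * E)) => //; nra.
have h3 : B * s <= 40 * C by nra.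
apply: (Rmult_le_reg_r C) => //.
rewrite /Rdiv Rmult_assoc Rinv_l; last lra.
have : 40 <= s * eps.
  have := Rmult_le_compat_r eps _ _ (Rlt_le _ _ heps) hs.
  by rewrite /Rdiv Rmult_assoc Rinv_l; lra.
nra.
Qed.
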